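(* Let $\kappa_3,\kappa_4,q$ be constants and let $y$ be a $C^3$ function on an open interval of $r>0$ on which $\kappa_3r^2+\kappa_4\neq0$. Then $y$ satisfies the third-order equation $$(\kappa_3r^2+\kappa_4)r^3y'''+(\kappa_3r^2-2\kappa_4)r^2y''-(\kappa_3r^2+2\kappa_4)ry'+8\kappa_4y=8-\frac{24q^2}{r^2}$$ if and only if there exists a constant $\kappa_2$ such that $y$ satisfies the second-order equation $$(\kappa_3r^2+\kappa_4)y''+\kappa_3ry'-\frac{2\kappa_4}{r^2}y+\frac{2}{r^2}=2\kappa_2r^2+\frac{4q^2}{r^4}.$$
   Context: Primes denote derivatives with respect to $r$. (In the paper, $y=b^2$ is the metric function of a static spherically symmetric solution of conformal Killing gravity coupled to linear electrodynamics with total charge $q$, $q^2=q_e^2+q_m^2$.) *)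

(* Defs.v *)
From Stdlib Require Import Reals.
From Coquelicot Require Import Coquelicot.
Open Scope R_scope.

Definition in_oint (a b : Rbar) (r : R) : Prop := Rbar_lt a r /\ Rbar_lt r b.

Definition C3_on (a b : Rbar) (y : R -> R) : Prop :=
  forall r, in_oint a b r ->
    (forall k, (k <= 3)%nat -> ex_derive_n y k r) /\ continuous (Derive_n y 3) r.

(* Main.v *)
Require Import Defs.
From Stdlib Require Import Reals.
From Coquelicot Require Import Coquelicot.
From Stdlib Require Import Lra Psatz.
Open Scope R_scope.
Definition G (k3 k4 q : R) (y : R -> R) (r : R) :=
  ((k3 * r ^ 2 + k4) * Derive_n y 2 r + k3 * r * Derive_n y 1 r
      - 2 * k4 / r ^ 2 * y r + 2 / r ^ 2 - 4 * q ^ 2 / r ^ 4) / r ^ 2.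
Definition E (k3 k4 q : R) (y : R -> R) (r : R) :=
  (k3 * r ^ 2 + k4) * r ^ 3 * Derive_n y 3 r
      + (k3 * r ^ 2 - 2 * k4) * r ^ 2 * Derive_n y 2 r
      - (k3 * r ^ 2 + 2 * k4) * r * Derive_n y 1 r
      + 8 * k4 * y r - (8 - 24 * q ^ 2 / r ^ 2).
Lemma derG k3 k4 q y r : 0 < r -> ex_derive_n y 1 r -> ex_derive_n y 2 r -> ex_derive_n y 3 r ->
  is_derive (G k3 k4 q y) r (E k3 k4 q y r / r ^ 5).
Proof.
intros Hr H1 H2 H3. unfold G, E. auto_derive.
- repeat split; auto; apply Rgt_not_eq; simpl; repeat apply Rmult_lt_0_compat; lra.
- match goal with |- ?A = ?B => change (@eq R A B) end.
  change (Derive_n y 3 r) with (Derive (fun x => Derive (fun x0 => Derive (fun x1 => y x1) x0) x) r).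
  change (Derive_n y 2 r) with (Derive (fun x => Derive (fun x0 => y x0) x) r).
  change (Derive_n y 1 r) with (Derive (fun x => y x) r).
  field. apply Rgt_not_eq; exact Hr.
Qed.


Lemma oint_pos a b r : Rbar_le (Finite 0) a -> in_oint a b r -> 0 < r.
Proof. intros H [H1 _]. exact (Rbar_le_lt_trans _ _ _ H H1). Qed.

Lemma oint_conv a b r1 r2 x : in_oint a b r1 -> in_oint a b r2 ->
  Rmin r1 r2 <= x <= Rmax r1 r2 -> in_oint a b x.
Proof.
intros [A1 B1] [A2 B2] [Hx1 Hx2]. split.
- apply Rbar_lt_le_trans with (Rmin r1 r2); [|exact Hx1].
  unfold Rmin; destruct (Rle_dec r1 r2); assumption.
- apply Rbar_le_lt_trans with (Rmax r1 r2); [exact Hx2|].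
  unfold Rmax; destruct (Rle_dec r1 r2); assumption.
Qed.

Lemma oint_ex a b : Rbar_le (Finite 0) a -> Rbar_lt a b -> exists r, in_oint a b r.
Proof.
intros H0 H. unfold in_oint.
destruct a as [a| |]; destruct b as [b| |]; simpl in *; try tauto.
- exists ((a+b)/2). simpl. split; lra.
- exists (a+1). simpl. split; lra.
Qed.

Lemma oint_loc a b r : in_oint a b r -> locally r (in_oint a b).
Proof.
intros [H1 H2]. apply filter_and.
- exact (open_Rbar_gt' r a H1).
- exact (open_Rbar_lt' r b H2).
Qed.

Theorem proposition12 (k3 k4 q : R) (a b : Rbar) (y : R -> R) :
  Rbar_le (Finite 0) a -> Rbar_lt a b ->
  C3_on a b y ->
  (forall r, in_oint a b r -> k3 * r ^ 2 + k4 <> 0) ->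
  ((forall r, in_oint a b r ->
      (k3 * r ^ 2 + k4) * r ^ 3 * Derive_n y 3 r
      + (k3 * r ^ 2 - 2 * k4) * r ^ 2 * Derive_n y 2 r
      - (k3 * r ^ 2 + 2 * k4) * r * Derive_n y 1 r
      + 8 * k4 * y r
      = 8 - 24 * q ^ 2 / r ^ 2)
   <->
   (exists k2 : R, forall r, in_oint a b r ->
      (k3 * r ^ 2 + k4) * Derive_n y 2 r + k3 * r * Derive_n y 1 r
      - 2 * k4 / r ^ 2 * y r + 2 / r ^ 2
      = 2 * k2 * r ^ 2 + 4 * q ^ 2 / r ^ 4)).
Proof.
intros Ha Hab HC Hk. 
assert (HD : forall r, in_oint a b r -> is_derive (G k3 k4 q y) r (E k3 k4 q y r / r ^ 5)).
{ intros r Hr. destruct (HC r Hr) as [Hd _]. apply derG.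
  - exact (oint_pos _ _ _ Ha Hr).
  - apply Hd; auto.
  - apply Hd; auto.
  - apply Hd; auto. }
split.
- intros H3. destruct (oint_ex a b Ha Hab) as [r0 Hr0].
  exists (G k3 k4 q y r0 / 2). intros r Hr.
  assert (HD0 : forall x, in_oint a b x -> is_derive (G k3 k4 q y) x 0).
  { intros x Hx. replace 0 with (E k3 k4 q y x / x ^ 5) by (unfold E; rewrite (H3 x Hx); unfold Rdiv; ring).
    auto. }
  destruct (MVT_gen (G k3 k4 q y) r0 r (fun _ => 0)) as [c [_ Hc]].
  + intros x Hx. apply HD0. apply (oint_conv a b r0 r); auto. lra.
  + intros x Hx. apply continuity_pt_filterlim. apply (ex_derive_continuous (G k3 k4 q y) x).
    exists 0. apply HD0. apply (oint_conv a b r0 r); auto.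
  + assert (Hr' := oint_pos _ _ _ Ha Hr).
    replace (G k3 k4 q y r0) with (G k3 k4 q y r) by lra.
    unfold G. field. apply Rgt_not_eq; exact Hr'.
- intros [k2 H2] r Hr.
  assert (Hr' := oint_pos _ _ _ Ha Hr).
  assert (Hc : is_derive (G k3 k4 q y) r 0).
  { apply is_derive_ext_loc with (fun _ => 2 * k2).
    - apply filter_imp with (in_oint a b); [|apply oint_loc; exact Hr].
      intros x Hx. match goal with |- ?A = ?B => change (@eq R A B) end. assert (Hx' := oint_pos _ _ _ Ha Hx). unfold G. rewrite (H2 x Hx).
      field. apply Rgt_not_eq; exact Hx'.
    - apply (is_derive_const (V:=R_NormedModule) (2*k2) r). }
  assert (Heq := is_derive_unique _ _ _ (HD r Hr)).
  rewrite (is_derive_unique _ _ _ Hc) in Heq.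
  assert (HE : E k3 k4 q y r = 0).
  { assert (Hp : r ^ 5 <> 0) by (apply pow_nonzero; lra).
    apply (Rmult_eq_reg_r (/ r ^ 5)); [|apply Rinv_neq_0_compat; exact Hp].
    rewrite Rmult_0_l. exact (eq_sym Heq). }
  unfold E in HE. lra.
Qed.
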